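(* Let $p$ be a prime, $q$ a power of $p$, and $F$ a field of characteristic $p$ containing $\mathbb{F}_q$. Let $L\in F[x]$ be a monic $q$-polynomial of $q$-degree $n$ such that: (1) $L(x)/x$ is irreducible over $F$; (2) $L$ is not a $q^s$-polynomial for any integer $s>1$; (3) $L=x^{q^n}+a_{n-k}x^{q^{n-k}}+\cdots+a_0x$ with $1\leq k\leq n$ and $a_{n-k}\neq0$ (so the coefficients of $x^{q^{n-1}},\dots,x^{q^{n-k+1}}$ vanish). Let $V$ be the space of roots of $L$ in a splitting field $E$ of $L$ over $F$, and let $\alpha,\beta\in V$ be linearly independent over $\mathbb{F}_q$. If $d$ is a positive integer such that $\alpha^d,\alpha^{d-1}\beta,\dots,\beta^d$ are linearly dependent over $\mathbb{F}_q$, then $d\geq q^k+1$.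
   Context: A $q$-polynomial of $q$-degree $n$ is $\sum_{i=0}^n a_ix^{q^i}$ with $a_n\neq0$; it is a $q^s$-polynomial if only exponents $q^j$ with $s\mid j$ occur. *)

(* Defs.v *)
From HB Require Import structures.
From mathcomp Require Import all_boot all_order all_algebra all_field.
Set Implicit Arguments. Unset Strict Implicit. Unset Printing Implicit Defensive.
Import GRing.Theory.
Local Open Scope ring_scope.

Definition is_qpoly_deg (F : fieldType) (q n : nat) (L : {poly F}) : Prop :=
  size L = (q ^ n).+1 /\
  (forall i : nat, L`_i != 0 -> exists j : nat, (j <= n)%N /\ i = (q ^ j)%N).

Definition is_qs_poly (F : fieldType) (q s : nat) (L : {poly F}) : Prop :=
  forall i : nat, L`_i != 0 -> exists j : nat, (s %| j)%N /\ i = (q ^ j)%N.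

(* Main.v *)
Require Import Defs.
From HB Require Import structures.
From mathcomp Require Import all_boot all_order all_algebra all_field.
From mathcomp Require Import zify.
Import GRing.Theory.
Local Open Scope ring_scope.

Lemma min_period (R : nzRingType) (g : R) (q n : nat) :
  (0 < n)%N -> g ^+ (q ^ n) = g ->
  exists s, [/\ (0 < s)%N, g ^+ (q ^ s) = g &
     forall j, g ^+ (q ^ j) = g -> (s %| j)%N].
Proof.
move=> n0 gn.
have exP : exists s, (0 < s)%N && (g ^+ (q ^ s) == g) by exists n; rewrite n0 gn eqxx.
case: (ex_minnP exP) => s /andP[s0 /eqP gs] smin.
exists s; split => // j gj.
have gst : forall t, g ^+ (q ^ (s * t)) = g.
  elim=> [|t IH]; first by rewrite muln0 expn0 expr1.
  by rewrite mulnS expnD exprM gs.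
have gr : g ^+ (q ^ (j %% s)%N) = g.
  by move: gj; rewrite {1}(divn_eq j s) (mulnC (j %/ s)%N) expnD exprM gst.
rewrite /dvdn; apply/negPn/negP => r0.
have := smin (j %% s)%N; rewrite lt0n r0 gr eqxx => /(_ isT).
by rewrite leqNgt ltn_mod s0.
Qed.

Lemma arith (A B C Qn Qk Qnk d : nat) :
  (A.+1 = Qn -> B.+1 <= Qnk -> A <= B * C -> C <= d -> d <= Qk -> Qn = Qk * Qnk -> 1 < Qk -> False)%N.
Proof.
move=> h1 h2 h3 h4 h5 h6 h7.
have : (B * C <= B * Qk)%N by rewrite leq_mul2l (leq_trans h4 h5) orbT.
nia.
Qed.

Theorem theorem7p8
  (p q m : nat) (F : fieldType) (K : finFieldType) (f : {rmorphism K -> F})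
  (E : fieldExtType F) (L : {poly F}) (n k d : nat) (alpha beta : E) :
  prime p -> (0 < m)%N -> q = (p ^ m)%N ->
  p \in [pchar F] ->
  #|K| = q ->
  L \is monic ->
  is_qpoly_deg q n L ->
  irreducible_poly (L %/ 'X) ->
  (forall s : nat, (1 < s)%N -> ~ is_qs_poly q s L) ->
  (1 <= k <= n)%N ->
  L`_(q ^ (n - k)) != 0 ->
  (forall j : nat, (n - k < j)%N -> (j < n)%N -> L`_(q ^ j) = 0) ->
  splittingFieldFor 1%VS (map_poly (in_alg E) L) fullv ->
  root (map_poly (in_alg E) L) alpha ->
  root (map_poly (in_alg E) L) beta ->
  (forall a b : K, (f a)%:A * alpha + (f b)%:A * beta = 0 -> a = 0 /\ b = 0) ->
  (0 < d)%N ->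
  (exists c : 'I_d.+1 -> K, (exists i, c i != 0) /\
     \sum_(i < d.+1) (f (c i))%:A * alpha ^+ (d - i) * beta ^+ i = 0) ->
  (q ^ k + 1 <= d)%N.
Proof.
move=> pp m0 qE _ cardK _ [szL Lq] irrL notqs /andP[k1 kn] _ Lzero _ ra rb
  indep d0 [c [[i0 ci0] Hsum]].
rewrite leqNgt; apply/negP; rewrite addn1 ltnS => dle.
have q2 : (1 < q)%N by have := ltn_exp2l 0 m (prime_gt1 pp); rewrite expn0 m0 -qE.
have q0 : (0 < q)%N by apply: ltnW.
have a0 : alpha != 0.
  apply/eqP => a0; have := indep 1 0.
  rewrite a0 rmorph0 scale0r !mul0r ?mulr0 ?addr0 ?add0r => /(_ erefl) [h _].
  by move/eqP: h; rewrite oner_eq0.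
have b0 : beta != 0.
  apply/eqP => b0; have := indep 0 1.
  rewrite b0 rmorph0 scale0r !mul0r ?mulr0 ?addr0 ?add0r => /(_ erefl) [_ h].
  by move/eqP: h; rewrite oner_eq0.
set L' := L %/ 'X.
have L0 : L`_0 = 0.
  case: (eqVneq (L`_0) 0) => // /Lq [j [_ h]].
  by have := expn_gt0 q j; rewrite -h q0.
have LE : L = L' * 'X.
  have dX : 'X %| L by rewrite -(subr0 'X) -polyC0 dvdp_XsubCl /root horner_coef0 L0.
  by rewrite divpK.
have coefL' : forall i, L'`_i = L`_i.+1 by move=> i; rewrite [in RHS]LE coefMX.
have szL' : size L' = (q ^ n)%N.
  by rewrite size_divp ?polyX_eq0 // size_polyX szL subn1.
have rootL' : forall x, root (map_poly (in_alg E) L) x -> x != 0 ->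
    root (map_poly (in_alg E) L') x.
  move=> x; rewrite LE rmorphM /= map_polyX rootM rootX => /orP[] // /eqP -> .
  by rewrite eqxx.
have ra' := rootL' _ ra a0; have rb' := rootL' _ rb b0.
have L'0 : L'`_0 != 0.
  apply/negP => /eqP h.
  have dX : 'X %| L' by rewrite -(subr0 'X) -polyC0 dvdp_XsubCl /root horner_coef0 h.
  case: (irrL) => _ /(_ 'X); rewrite size_polyX => /(_ isT dX) eqX.
  have eqX' : map_poly (in_alg E) 'X %= map_poly (in_alg E) L' by rewrite eqp_map.
  have : root (map_poly (in_alg E) 'X) beta by rewrite (eqp_root eqX').
  by rewrite map_polyX rootX (negPf b0).
set g := alpha / beta.
have gb : g * beta = alpha by rewrite /g divfK.
have g0 : g != 0 by rewrite /g mulf_neq0 ?invr_eq0.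
clearbody g.
have adb : (adjoin_degree 1 beta).+1 = (q ^ n)%N.
  have [r Dr] := polyOver1P (minPolyOver 1 beta).
  have : minPoly 1 beta %| map_poly (in_alg E) L'.
    apply: minPoly_dvdp => //; apply/polyOver1P; by exists L'.
  rewrite Dr dvdp_map => rL.
  have szr : size r = (adjoin_degree 1 beta).+1 by rewrite -(size_minPoly 1 beta) Dr size_map_poly.
  case: (irrL) => _ /(_ r); rewrite szr => /(_ isT rL) /eqp_size.
  by rewrite szr szL'.
have in1 : forall x : F, x%:A \in (1%VS : {vspace E}) by move=> x; rewrite memvZ // mem1v.
have adg : (adjoin_degree 1 g <= d)%N.
  pose P : {poly E} := \sum_(i < d.+1) ((f (c i))%:A)%:P * 'X^(d - i).
  have P1 : P \is a polyOver 1%VS.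
    by apply: rpred_sum => i _; rewrite rpredM ?rpredX ?polyOverX ?polyOverC.
  have Pr : root P g.
    have bd : beta ^+ d != 0 by rewrite expf_neq0.
    suff : P.[g] * beta ^+ d = 0 by move/eqP; rewrite mulf_eq0 (negPf bd) orbF.
    rewrite horner_sum mulr_suml; apply: (etrans _ Hsum); apply: eq_bigr => i _.
    rewrite hornerM hornerC hornerXn -!mulrA; congr (_ * _).
    rewrite -[alpha in RHS]gb exprMn -mulrA -exprD subnK //; exact: ltnSE (ltn_ord i).
  have szP : (size P <= d.+1)%N.
    apply/leq_sizeP => j hj; rewrite coef_sum big1 // => i _.
    rewrite coefCM coefXn; case: eqP => [hji|]; last by rewrite mulr0.
    by move: hj; rewrite hji ltnNge leq_subr.
  have P0 : P != 0.
    apply/eqP => /(congr1 (fun p : {poly E} => p`_(d - i0)%N)); rewrite coef0 coef_sum.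
    rewrite (bigD1 i0) //= big1 ?addr0.
      rewrite coefCM coefXn eqxx mulr1 => /eqP; rewrite scaler_eq0 oner_eq0 orbF fmorph_eq0.
      by rewrite (negPf ci0).
    move=> i ii0; rewrite coefCM coefXn; case: eqP => [h|]; last by rewrite mulr0.
    case/eqP: ii0; apply: val_inj => /=.
    by rewrite -(subKn (ltnSE (ltn_ord i))) -h subKn // ltnSE.
  have := dvdp_leq P0 (minPoly_dvdp P1 Pr).
  by rewrite size_minPoly => /leq_trans /(_ szP).
pose Kg : {subfield E} := <<1; g>>%AS.
pose N : {poly E} := \poly_(i < q ^ n) ((L'`_i)%:A * (g ^+ i - g ^+ (q ^ n).-1)).
have NK : N \is a polyOver Kg.
  apply: polyOver_poly => i _.
  have gK : g \in Kg by exact: memv_adjoin.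
  have iK : (L'`_i)%:A \in Kg by rewrite memvZ // mem1v.
  by rewrite rpredM // rpredB // rpredX.
have Nr : root N beta.
  rewrite /root horner_poly.
  have szm : (size (map_poly (in_alg E) L') <= q ^ n)%N by rewrite size_map_poly szL'.
  have e1 := ra'; have e2 := rb'.
  rewrite /root (horner_coef_wide _ szm) in e1.
  rewrite /root (horner_coef_wide _ szm) in e2.
  move/eqP: e1 => e1; move/eqP: e2 => e2.
  set S1 := \sum_(i < q ^ n) _ * alpha ^+ i in e1.
  set S2 := \sum_(i < q ^ n) _ * beta ^+ i in e2.
  have e3 : S1 - g ^+ (q ^ n).-1 * S2 = 0 by rewrite e1 e2 mulr0 subr0.
  apply/eqP; apply: (etrans _ e3); rewrite /S1 /S2.
  rewrite mulr_sumr -sumrB; apply: eq_bigr => i _.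
  rewrite coef_map /= -[alpha]gb exprMn mulrBr mulrBl mulrA; congr (_ - _).
    by rewrite mulrA.
  by rewrite [(L'`_i)%:A * _]mulrC.
have qmono : forall a b, (q ^ a < q ^ b)%N = (a < b)%N by move=> a b; rewrite ltn_exp2l.
have szN : (size N <= q ^ (n - k))%N.
  apply/leq_sizeP => j hj; rewrite coef_poly; case: ifP => // jn.
  have [->|jne] := eqVneq j (q ^ n).-1; first by rewrite subrr mulr0.
  suff -> : L'`_j = 0 by rewrite scale0r mul0r.
  rewrite coefL'; case: (eqVneq (L`_j.+1) 0) => // Lj.
  have [t [tn jt]] := Lq _ Lj.
  have jn' : (j.+1 < q ^ n)%N.
    have jQ : j.+1 != (q ^ n)%N by apply: contra jne => /eqP <-.
    by rewrite ltn_neqAle jQ jn.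
  have h1 : (n - k < t)%N by rewrite -qmono -jt.
  have h2 : (t < n)%N by rewrite -qmono -jt.
  by move: Lj; rewrite jt Lzero ?eqxx.
have qn0 : (0 < q ^ n)%N by rewrite expn_gt0 q0.
have N0 : N != 0.
  apply/eqP => N0.
  have cz : forall i, (i < q ^ n)%N -> L'`_i != 0 -> g ^+ i = g ^+ (q ^ n).-1.
    move=> ii iq Li; have := congr1 (fun p : {poly E} => p`_ii) N0; rewrite coef_poly iq coef0 /=.
    move/eqP; rewrite mulf_eq0 scaler_eq0 oner_eq0 orbF (negPf Li) /= subr_eq0.
    by move/eqP.
  have g1 : g ^+ (q ^ n).-1 = 1 by rewrite -(cz 0%N) ?expr0.
  have gqn : g ^+ (q ^ n) = g by rewrite -(prednK qn0) exprS g1 mulr1.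
  have gj : forall j, (j <= n)%N -> L`_(q ^ j) != 0 -> g ^+ (q ^ j) = g.
    move=> j jn Lj.
    have qj0 : (0 < q ^ j)%N by rewrite expn_gt0 q0.
    have qjn : (q ^ j <= q ^ n)%N by rewrite leq_pexp2l.
    have iq : ((q ^ j).-1 < q ^ n)%N.
      by rewrite -(prednK qj0) in qjn.
    have Lj' : L'`_(q ^ j).-1 != 0 by rewrite coefL' prednK.
    by rewrite -(prednK qj0) exprS (cz _ iq Lj') g1 mulr1.
  have n0 : (0 < n)%N by apply: leq_trans kn.
  have [s [s0 gs sdiv]] := @min_period _ g q n n0 gqn.
  case: (ltnP 1 s) => s1.
    apply: (notqs s s1) => ii Li; have [j [jn ij]] := Lq ii Li.
    exists j; split => //; apply: sdiv; apply: gj jn _; by rewrite -ij.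
  have s1' : s = 1%N by apply/eqP; rewrite eqn_leq s1 s0.
  have gq : g ^+ q = g by move: gs; rewrite s1' expn1.
  pose h := fun x : K => (f x)%:A : E.
  have hinj : injective h.
    move=> x y /= /(fmorph_inj (in_alg E)) /fmorph_inj; done.
  pose rs := map h (enum K).
  have szrs : size rs = q by rewrite size_map -cardE cardK.
  pose P : {poly E} := 'X^q - 'X.
  have szP : size P = q.+1.
    by rewrite /P size_polyDl ?size_polyXn // size_polyN size_polyX ltnS.
  have P0 : P != 0 by rewrite -size_poly_eq0 szP.
  have rsr : all (root P) rs.
    apply/allP => y /mapP [x _ ->]; rewrite /root /P !hornerE /h.
    by rewrite exprZn expr1n -rmorphXn -cardK expf_card subrr.
  have : g \in rs.
    apply/negPn/negP => gn.
    have := max_poly_roots P0 (rs := g :: rs); rewrite /= rsr andbT gn map_inj_uniq //.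
    have hr : root P g by rewrite /root /P !hornerE gq subrr.
    by rewrite enum_uniq szP szrs ltnn => /(_ hr isT).
  case/mapP => x _ gx.
  have := indep 1 (- x); rewrite rmorph1 rmorphN scaleNr mulNr -/(h x) -gx gb scale1r mul1r subrr.
  by move=> /(_ erefl) [/eqP]; rewrite oner_eq0.
have adN : ((adjoin_degree Kg beta).+1 <= q ^ (n - k))%N.
  have := dvdp_leq N0 (minPoly_dvdp NK Nr); rewrite size_minPoly => /leq_trans; apply.
  exact: szN.
have dims : (adjoin_degree 1 beta <= adjoin_degree Kg beta * adjoin_degree 1 g)%N.
  have e1 := dim_Fadjoin 1%AS beta; rewrite dimv1 muln1 in e1.
  have e2 := dim_Fadjoin Kg beta.
  have e3 := dim_Fadjoin 1%AS g; rewrite dimv1 muln1 in e3.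
  rewrite -e1 -e3 -e2; apply: dimvS.
  have := sub_adjoin1v beta (<<Kg; beta>>%AS); rewrite memv_adjoin; by [].
have qnk : (q ^ n = q ^ k * q ^ (n - k))%N by rewrite -expnD subnKC.
have qk2 : (1 < q ^ k)%N by have := ltn_exp2l 0 k q2; rewrite expn0 k1.
exact: (@arith _ _ _ _ _ _ _ adb adN dims adg dle qnk qk2).
Qed.
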